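(* Let $P$ be a nondegenerate polyhedron in $\mathbb{R}^3$ which is the image of a sphere-homeomorphic simplicial complex $K$, which is rigid, and for which there exists a sequence of flexible nondegenerate polyhedra $P_n$, each having the same combinatorial structure as $P$, with $P_n\to P$ as $n\to\infty$. Let $v$ be the number of vertices of $P$. Then there is no algebraic set $A\subset\mathbb{R}^{3v}$ such that $\varphi(F_{[\![P]\!]}) = A\cap\varphi([\![P]\!])$.
   Context: A polyhedron is a continuous mapping from a finite 2-dimensional simplicial complex $K$ into $\mathbb{R}^3$ that is affine on each simplex of $K$. Its vertices, edges and faces are the images of the vertices, edges and 2-simplices of $K$. A polyhedron is nondegenerate if every face is a nondegenerate (non-collinear) triangle. Two nondegenerate polyhedra have the same combinatorial structure if they are mappings from the same simplicial complex. A polyhedron is flexible if it admits a continuous deformation through polyhedra on the same complex keeping every face congruent to itself (all edge lengths preserved) that is not induced by isometries of $\mathbb{R}^3$; otherwise it is rigid. For a nondegenerate polyhedron $Q$ on a complex $K$ with $v$ vertices, $[\![Q]\!]$ denotes the set of all nondegenerate polyhedra with the same combinatorial structure as $Q$. Fixing an enumeration of the vertices of $K$, the map $\varphi:[\![Q]\!]\to\mathbb{R}^{3v}$ sends a polyhedron to the point listing the coordinates of its vertices in this order ($\varphi([\![Q]\!])$ is open in $\mathbb{R}^{3v}$). $F_{[\![Q]\!]}$ denotes the set of flexible polyhedra in $[\![Q]\!]$. Convergence $P_n\to P$ means $\varphi(P_n)\to\varphi(P)$ in $\mathbb{R}^{3v}$. An algebraic set in $\mathbb{R}^{3v}$ is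 the common zero set of a family of real polynomials in $3v$ variables. *)

(* Defs.v *)
From HB Require Import structures.
From mathcomp Require Import all_boot all_order all_algebra.
From mathcomp Require Import all_classical all_reals all_analysis.
From mathcomp Require mpoly.
Set Implicit Arguments. Unset Strict Implicit. Unset Printing Implicit Defensive.
Import Order.TTheory GRing.Theory Num.Theory.
Import numFieldNormedType.Exports.
Local Open Scope classical_set_scope.
Local Open Scope ring_scope.

Definition simplicial_complex (v : nat) (K : {set {set 'I_v}}) : Prop :=
  [/\ finset.set0 \notin K,
      (forall i : 'I_v, [set i]%SET \in K),
      (forall s : {set 'I_v}, s \in K -> (#|s| <= 3)%N) &
      (forall s t : {set 'I_v}, s \in K -> t \subset s -> t != finset.set0 -> t \in K)].

Definition is_edge (v : nat) (K : {set {set 'I_v}}) (a b : 'I_v) : Prop :=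
  a != b /\ [set a; b]%SET \in K.
Definition is_face (v : nat) (K : {set {set 'I_v}}) (a b c : 'I_v) : Prop :=
  [/\ a != b, b != c, a != c & [set a; b; c]%SET \in K].

(* Geometric realization |K| inside the standard simplex of R^v. *)
Definition realization (R : realType) (v : nat) (K : {set {set 'I_v}})
  : set 'rV[R]_v :=
  [set x | (forall i, 0 <= x 0 i) /\ \sum_i x 0 i = 1 /\
           [set i | x 0 i != 0]%SET \in K].

Definition sqdist (R : realType) (x y : 'rV[R]_3) : R :=
  \sum_(j < 3) (x 0 j - y 0 j) ^+ 2.
Definition sphere2 (R : realType) : set 'rV[R]_3 :=
  [set y | sqdist y 0 = 1].

Definition homeomorphic (T U : topologicalType) (A : set T) (B : set U) : Prop :=
  exists (f : T -> U) (g : U -> T),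
    [/\ (forall x, A x -> B (f x)), (forall y, B y -> A (g y)),
        (forall x, A x -> g (f x) = x), (forall y, B y -> f (g y) = y) &
        ({within A, continuous f} /\ {within B, continuous g})].

Definition sphere_homeomorphic (R : realType) (v : nat)
  (K : {set {set 'I_v}}) : Prop :=
  homeomorphic (@realization R v K) (@sphere2 R).

(* A polyhedron on K is determined by (and identified with) the positions of
   its vertices: row i of p : 'M_(v,3) is the image of vertex i.  The map
   phi of the paper is mxvec, giving (x_1,y_1,z_1,x_2,...) in R^(3v). *)
Definition vert (R : realType) (v : nat) (p : 'M[R]_(v, 3)) (i : 'I_v)
  : 'rV[R]_3 := row i p.

Definition phi (R : realType) (v : nat) (p : 'M[R]_(v, 3)) : 'rV[R]_(v * 3) :=
  mxvec p.

Definition collinear (R : realType) (x y z : 'rV[R]_3) : Prop :=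
  exists (q d : 'rV[R]_3) (tx ty tz : R),
    [/\ x = q + tx *: d, y = q + ty *: d & z = q + tz *: d].

Definition nondegenerate_poly (R : realType) (v : nat) (K : {set {set 'I_v}})
  (p : 'M[R]_(v, 3)) : Prop :=
  forall a b c, is_face K a b c -> ~ collinear (vert p a) (vert p b) (vert p c).

Definition isometry3 (R : realType) (g : 'rV[R]_3 -> 'rV[R]_3) : Prop :=
  forall x y, sqdist (g x) (g y) = sqdist x y.

Definition flexible (R : realType) (v : nat) (K : {set {set 'I_v}})
  (p : 'M[R]_(v, 3)) : Prop :=
  exists f : R -> 'M[R]_(v, 3),
    [/\ f 0 = p,
        {within `[0, 1], continuous f},
        (forall t, t \in `[0, 1] -> forall a b, is_edge K a b ->
            sqdist (vert (f t) a) (vert (f t) b) = sqdist (vert p a) (vert p b)) &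
        ~ (forall t, t \in `[0, 1] -> exists g, isometry3 g /\
              forall i, vert (f t) i = g (vert p i))].

Definition rigid (R : realType) (v : nat) (K : {set {set 'I_v}})
  (p : 'M[R]_(v, 3)) : Prop := ~ flexible K p.

(* [[Q]] : nondegenerate_poly polyhedra on K, and F_[[Q]] : the flexible ones. *)
Definition same_structure (R : realType) (v : nat) (K : {set {set 'I_v}})
  : set 'M[R]_(v, 3) := [set q | nondegenerate_poly K q].
Definition flexible_class (R : realType) (v : nat) (K : {set {set 'I_v}})
  : set 'M[R]_(v, 3) := [set q | nondegenerate_poly K q /\ flexible K q].

Definition algebraic_set (R : realType) (n : nat) (A : set 'rV[R]_n) : Prop :=
  exists S : set (mpoly.mpoly n R),
    A = [set x | forall P, S P -> mpoly.meval (fun i => x 0 i) P = 0].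

(* Main.v *)
Require Import Defs.
From HB Require Import structures.
From mathcomp Require Import all_boot all_order all_algebra.
From mathcomp Require Import all_classical all_reals all_analysis.
From mathcomp Require mpoly.
Import Order.TTheory GRing.Theory Num.Theory.
Import numFieldNormedType.Exports.
Local Open Scope classical_set_scope.
Local Open Scope ring_scope.

Lemma meval_cvg (R : realType) (n : nat) (Q : mpoly.mpoly n R)
  (u : nat -> 'rV[R]_n) (l : 'rV[R]_n) : u @ \oo --> l ->
  (fun k => mpoly.meval (fun i => u k 0 i) Q) @ \oo --> mpoly.meval (fun i => l 0 i) Q.
Proof.
move=> ul.
rewrite mpoly.mevalE.
under eq_fun do rewrite mpoly.mevalE.
apply: (@cvg_big _ _ +%R 0 xpredT add_continuous) => // m _.
apply: cvgM; first exact: cvg_cst.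
apply: cvg_big => //; [exact: mul_continuous| move=> i _].
have ui : (fun k => u k 0 i) @ \oo --> l 0 i.
  exact: (cvg_comp _ _ ul (@coord_continuous R 1 n 0 i l)).
elim: (mpoly.fun_of_multinom m i) => [|k IH].
  under eq_fun do rewrite expr0. rewrite expr0. exact: cvg_cst.
under eq_fun do rewrite exprS. rewrite exprS. exact: cvgM.
Qed.

Theorem theorem2 (R : realType) (v : nat) (K : {set {set 'I_v}})
  (P : 'M[R]_(v, 3)) (Pn : nat -> 'M[R]_(v, 3)) :
  simplicial_complex K ->
  sphere_homeomorphic R K ->
  nondegenerate_poly K P ->
  rigid K P ->
  (forall n, nondegenerate_poly K (Pn n) /\ flexible K (Pn n)) ->
  (fun n => phi (Pn n)) @ \oo --> phi P ->
  ~ exists A : set 'rV[R]_(v * 3),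
      algebraic_set A /\
      (@phi R v) @` @flexible_class R v K = A `&` (@phi R v) @` @same_structure R v K.
Proof.
move=> _ _ ndP rigP Hn Hc [A [[S AE] HA]].
have inA : forall n, A (phi (Pn n)).
  move=> n.
  have : ((@phi R v) @` @flexible_class R v K) (phi (Pn n)) by exists (Pn n).
  by rewrite HA => -[].
have PA : A (phi P).
  rewrite AE => Q SQ.
  have h1 := @meval_cvg _ _ Q _ _ Hc.
  have h2 : (fun k => mpoly.meval (fun i => phi (Pn k) 0 i) Q) = fun _ => 0.
    apply: funext => k; have := inA k; rewrite AE; exact.
  rewrite h2 in h1.
  have h3 : (fun _ : nat => (0:R)) @ \oo --> (0:R) by exact: cvg_cst.
  by apply/esym; exact: (cvg_unique _ h3 h1).
have : ((@phi R v) @` @flexible_class R v K) (phi P).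
  by rewrite HA; split => //; exists P.
move=> [q [_ fq] /(can_inj (@mxvecK _ _ _))] qP.
by apply: rigP; rewrite -qP.
Qed.
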